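(* Let $G=(V,E)$ be a graph with $|V|\ge d+1$, fix distinct vertices $v_1,\dots,v_d$ and the space $X_{G,d}$. Let $p\in X_{G,d}$ be such that $p(v_1),\dots,p(v_d)$ are affinely independent. Then the restriction of the linear map $R(G,p):(\mathbb{C}^d)^V\to\mathbb{C}^E$ to the linear subspace $X_{G,d}$ has rank $d|V|-\binom{d+1}{2}$ if and only if $(G,p)$ is infinitesimally rigid.
   Context: On $\mathbb{C}^d$ use $\|x\|^2=\sum x_i^2$ and the bilinear dot product $x\cdot y=\sum x_iy_i$. For a graph $G=(V,E)$ with at least $d+1$ vertices and a fixed sequence of distinct vertices $v_1,\dots,v_d$, define $X_{G,d}=\{p\in(\mathbb{C}^d)^V : p_j(v_k)=0 \text{ for all } 1\le k\le j\le d\}$, where $p_j(v)$ is the $j$-th coordinate of $p(v)$. The rigidity matrix $R(G,p)$ is the $|E|\times d|V|$ matrix whose row for edge $uv$ has $p(u)-p(v)$ in the $d$ columns of $u$, $p(v)-p(u)$ in the $d$ columns of $v$, and zeros elsewhere (it is the Jacobian at $p$ of $p\mapsto(\tfrac12\|p(v)-p(w)\|^2)_{vw\in E}$). The framework $(G,p)$ is infinitesimally rigid if $\operatorname{rank}R(G,p)=d|V|-\binom{d+1}{2}$, or $G=K_n$ with $n\le d+1$ and the points $p(v)$ affinely independent. *)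

(* Defs.v *)
From HB Require Import structures.
From mathcomp Require Import all_boot all_order all_algebra.
From mathcomp Require Import complex.
From mathcomp Require Import Rstruct.
Set Implicit Arguments. Unset Strict Implicit. Unset Printing Implicit Defensive.
Import Order.TTheory GRing.Theory Num.Theory.
Local Open Scope ring_scope.

Definition CC : fieldType := complex Rdefinitions.R.

Section Rigidity.
Variables (n d : nat).

(* Graphs: vertex set 'I_n, a (symmetric, irreflexive) edge relation e.
   Configurations p : 'M[CC]_(n, d); p(w) is the row  row w p  and
   p_j(w) is the entry  p w j. *)

Definition simple_graph (e : rel 'I_n) : Prop :=
  symmetric e /\ irreflexive e.

Definition edges (e : rel 'I_n) : {set 'I_n * 'I_n} :=
  [set x : 'I_n * 'I_n | (x.1 < x.2)%N && e x.1 x.2].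

(* The row of R(G,p) for the edge uw, displayed as an n x d matrix (one row
   per vertex): p(u)-p(w) in the block of u, p(w)-p(u) in the block of w,
   zero elsewhere. *)
Definition edge_row (p : 'M[CC]_(n, d)) (x : 'I_n * 'I_n) : 'M[CC]_(n, d) :=
  \matrix_(z, j) (if z == x.1 then p x.1 j - p x.2 j
                  else if z == x.2 then p x.2 j - p x.1 j else 0).

Definition rigidity_matrix (e : rel 'I_n) (p : 'M[CC]_(n, d))
  : 'M[CC]_(#|edges e|, n * d) :=
  \matrix_(k < #|edges e|) mxvec (edge_row p (@enum_val _ (mem (edges e)) k)).

(* X_{G,d}: p_j(v_k) = 0 for all k <= j (indices 0-based here). *)
Definition in_X (v : 'I_d -> 'I_n) (p : 'M[CC]_(n, d)) : Prop :=
  forall k j : 'I_d, (k <= j)%N -> p (v k) j = 0.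

Definition X_mask (v : 'I_d -> 'I_n) : 'M[CC]_(n, d) :=
  \matrix_(z, j) (if [exists k : 'I_d, (z == v k) && (k <= j)%N] then 0 else 1).

(* A matrix (in mxvec layout) whose row space is exactly X_{G,d}. *)
Definition X_mx (v : 'I_d -> 'I_n) : 'M[CC]_(n * d) :=
  diag_mx (mxvec (X_mask v)).

(* Rank of the restriction of a linear map (given by A acting on column
   vectors) to the subspace spanned by the rows of S:
   dim A(rowspace S) = rank (S A^T). *)
Definition restricted_rank m k (A : 'M[CC]_(m, k)) (S : 'M[CC]_k) : nat :=
  \rank (S *m A^T).

End Rigidity.

Definition affinely_independent m d (q : 'M[CC]_(m, d)) : bool :=
  row_free (row_mx q (const_mx 1 : 'cV[CC]_m)).

Definition complete_graph n (e : rel 'I_n) : Prop :=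
  forall u w : 'I_n, e u w = (u != w).

Definition inf_rigid n d (e : rel 'I_n) (p : 'M[CC]_(n, d)) : Prop :=
  \rank (rigidity_matrix e p) = (n * d - 'C(d.+1, 2))%N
  \/ (complete_graph e /\ (n <= d.+1)%N /\ affinely_independent p).

(* Main.v *)
Require Import Defs.
From HB Require Import structures.
From mathcomp Require Import all_boot all_order all_algebra.
From mathcomp Require Import complex Rstruct.
From mathcomp Require Import ring zify.
Set Implicit Arguments. Unset Strict Implicit. Unset Printing Implicit Defensive.
Import Order.TTheory GRing.Theory Num.Theory.
Local Open Scope ring_scope.


Lemma mxvec_dot (m k : nat) (A B : 'M[CC]_(m, k)) :
  (mxvec A *m (mxvec B)^T) 0 0 = \sum_z \sum_j A z j * B z j.
Proof.
rewrite mxE (reindex _ (curry_mxvec_bij _ _)) /= pair_bigA /=.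
by apply: eq_bigr => [[i j]] _ /=; rewrite mxE !mxvecE.
Qed.

Section Ker.
Variables (n d : nat) (e : rel 'I_n) (p : 'M[CC]_(n, d)).

Definition edge_cond (M : 'M[CC]_(n, d)) :=
  forall a b : 'I_n, a != b -> \sum_l (M a l - M b l) * (p a l - p b l) = 0.

Lemma ker_of M : edge_cond M -> mxvec M *m (rigidity_matrix e p)^T = 0.
Proof.
move=> H; apply/rowP => k; rewrite [RHS]mxE.
set x := enum_val k.
have: x \in edges e by exact: enum_valP.
rewrite inE => /ssrbool.andP [lt12 _].
have ne12 : x.1 != x.2 by rewrite neq_ltn lt12.
transitivity ((mxvec M *m (mxvec (edge_row p x))^T) 0 0).
  by rewrite !mxE; apply: eq_bigr => i _; rewrite !mxE.
rewrite mxvec_dot [\sum_(z < n) _](bigD1 x.1) //= [\sum_(z < n | _) _](bigD1 x.2) 1?eq_sym //=.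
rewrite [\sum_(i < n | _ && _) _]big1; last first.
  move=> z /andP [nz1 nz2]; apply: big1 => j _.
  by rewrite mxE (negPf nz1) (negPf nz2) mulr0.
rewrite addr0 -big_split /=; rewrite -[RHS](H _ _ ne12); apply: eq_bigr => j _.
rewrite !mxE eqxx eq_sym (negPf ne12) eqxx.
ring.
Qed.
End Ker.

Lemma sum_delta (k : nat) (j : 'I_k) (F : 'I_k -> CC) :
  \sum_l F l * (j == l)%:R = F j.
Proof.
rewrite (bigD1 j) //= eqxx mulr1 big1 ?addr0 // => l /negPf.
by rewrite eq_sym => ->; rewrite mulr0.
Qed.

Section Main.
Variables (n d : nat) (e : rel 'I_n) (v : 'I_d -> 'I_n) (p : 'M[CC]_(n, d)).
Hypothesis HX : in_X v p.

Definition Km := kermx (rigidity_matrix e p)^T.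
Definition good (x : 'M[CC]_(n, d)) := (mxvec x <= X_mx v + Km)%MS.

Lemma good_X (x : 'M[CC]_(n, d)) : (forall k j : 'I_d, (k <= j)%N -> x (v k) j = 0) -> good x.
Proof.
move=> H; apply: submx_trans (addsmxSl _ _).
have -> : mxvec x = mxvec x *m X_mx v.
  apply/rowP => i; case/mxvec_indexP: i => z j.
  rewrite /X_mx mul_mx_diag mxE !mxvecE mxE.
  case: existsP => [[k /andP [/eqP -> hk]] | _]; last by rewrite mulr1.
  by rewrite H // mul0r.
exact: submxMl.
Qed.

Lemma good_ker (x : 'M[CC]_(n, d)) : edge_cond p x -> good x.
Proof.
move=> H; apply: submx_trans (addsmxSr _ _).
by apply/sub_kermxP; exact: ker_of.
Qed.

Lemma good_add (x y : 'M[CC]_(n, d)) : good x -> good y -> good (x + y).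
Proof. by rewrite /good linearD /=; exact: addmx_sub. Qed.

Lemma good_scale a (x : 'M[CC]_(n, d)) : good x -> good (a *: x).
Proof. by rewrite /good linearZ /=; exact: scalemx_sub. Qed.

Lemma good_sum (I : finType) (F : I -> 'M[CC]_(n, d)) :
  (forall i, good (F i)) -> good (\sum_i F i).
Proof. move=> H; rewrite /good linear_sum /=; by apply: summx_sub => i _; apply: H. Qed.

Definition trans (j : 'I_d) : 'M[CC]_(n, d) := \matrix_(w, l) ((l == j)%:R).
Definition rot (i j : 'I_d) : 'M[CC]_(n, d) :=
  \matrix_(w, l) ((l == j)%:R * p w i - (l == i)%:R * p w j).

Lemma good_trans j : good (trans j).
Proof.
apply: good_ker => a b _; apply: big1 => l _.
by rewrite !mxE subrr mul0r.
Qed.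

Lemma good_rot i j : good (rot i j).
Proof.
apply: good_ker => a b _.
transitivity (\sum_l ((p a l - p b l) * (p a i - p b i) * (j == l)%:R
                     - (p a l - p b l) * (p a j - p b j) * (i == l)%:R)).
  apply: eq_bigr => l _; rewrite !mxE [j == l]eq_sym [i == l]eq_sym; ring.
by rewrite sumrB !sum_delta; ring.
Qed.


Hypothesis Hc : forall m (hm : (m.+1 < d)%N),
  p (v (Ordinal hm)) (Ordinal (ltnW hm)) != 0.

Lemma all_good (x : 'M[CC]_(n, d)) : good x.
Proof.
suff H : forall t m, (m + t)%N = d -> forall x : 'M[CC]_(n, d),
    (forall k j : 'I_d, (k < m)%N -> (k <= j)%N -> x (v k) j = 0) -> good x.
  by apply: (H d 0%N) => //.
elim=> [|t IH] m Hmt {}x Hx.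
  by apply: good_X => k j; apply: Hx; rewrite (leq_trans (ltn_ord k)) // -Hmt addn0.
have hm : (m < d)%N by rewrite -Hmt addnS ltnS leq_addr.
have IH' : forall x0 : 'M[CC]_(n, d), (forall k j : 'I_d, (k < m.+1)%N -> (k <= j)%N -> x0 (v k) j = 0) -> good x0.
  by apply: IH; rewrite addSnnS.
move: hm Hmt Hx IH'; case: m => [|m'] hm Hmt Hx IH'.
  pose mo := Ordinal hm.
  pose y := \sum_j x (v mo) j *: trans j.
  have gy : good y by apply: good_sum => j; apply/good_scale/good_trans.
  rewrite -(subrK y x); apply: good_add => //; apply: IH' => k j hk _.
  have -> : k = mo by apply: val_inj => /=; move: hk; rewrite ltnS leqn0 => /eqP.
  rewrite !mxE summxE.
  under eq_bigr do rewrite !mxE.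
  by rewrite sum_delta subrr.
pose mo := Ordinal hm.
pose io := Ordinal (ltnW hm).
have hc := Hc hm.
pose c := p (v mo) io.
pose y := \sum_(j : 'I_d) (((m'.+1 <= j)%N%:R * (x (v mo) j / c)) *: rot io j).
have gy : good y by apply: good_sum => j; apply/good_scale/good_rot.
rewrite -(subrK y x); apply: good_add => //; apply: IH' => k j hk hkj.
rewrite !mxE summxE.
under eq_bigr do rewrite !mxE.
case: (ltnP k m'.+1) => hk1.
  rewrite Hx // big1 ?subr0 // => l _.
  rewrite (HX (k:=k) (j:=io)) /=; last by rewrite -ltnS.
  case: (leqP m'.+1 l) => hl; last by rewrite mul0r mul0r.
  by rewrite (HX (leq_trans (ltnW hk1) hl)) !(mulr0, subr0).
have ekm : k = mo by apply: val_inj => /=; apply/eqP; rewrite eqn_leq hk1 -ltnS hk.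
have -> : (j == io) = false.
  apply/negP => /eqP /(congr1 val) /= ej; move: hkj; rewrite ej.
  by rewrite leqNgt (leq_trans _ hk1).
rewrite ekm.
under eq_bigr do rewrite mul0r subr0 [(j == _)]eq_sym.
rewrite (bigD1 j) //= eqxx big1 ?addr0; last first.
  by move=> l /negPf ->; rewrite mul0r mulr0.
have -> : (m' < j)%N by exact: leq_trans hk1 hkj.
rewrite /= mulr1n !mul1r -/c divfK //; exact: subrr.
Qed.

Lemma rank_eq :
  \rank (X_mx v *m (rigidity_matrix e p)^T) = \rank (rigidity_matrix e p).
Proof.
set R := rigidity_matrix e p.
apply/eqP; rewrite eqn_leq; apply/andP; split.
  by rewrite (leq_trans (mxrankM_maxr _ _)) // mxrank_tr.
rewrite -mxrank_tr; apply: mxrankS.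
have H1 : ((1%:M : 'M_(n * d)) <= X_mx v + Km)%MS.
  by apply/row_subP => i; rewrite -[row i _]vec_mxK; exact: all_good.
have := submxMr R^T H1; rewrite mul1mx => H2.
apply: (submx_trans H2); rewrite addsmxMr /Km mulmx_ker addsmx0.
exact: submx_refl.
Qed.

End Main.

Section Aff.
Variables (n d : nat) (v : 'I_d -> 'I_n) (p : 'M[CC]_(n, d)).
Hypothesis HX : in_X v p.
Hypothesis Haff : affinely_independent (\matrix_(k < d) row (v k) p).

Definition ordpred (l : 'I_d) : 'I_d :=
  Ordinal (leq_ltn_trans (leq_pred l) (ltn_ord l)).

Definition Ap : 'M[CC]_d :=
  \matrix_(k, l) (if (l == 0 :> nat) then 1 else p (v k) (ordpred l)).

Lemma Ap_trig : is_trig_mx Ap.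
Proof.
apply/is_trig_mxP => k l hkl; rewrite mxE.
have -> : (l == 0 :> nat) = false by apply/negP => /eqP hl; rewrite hl in hkl.
by apply: HX => /=; rewrite -ltnS (ltn_predK hkl).
Qed.

Lemma Ap_det : \det Ap != 0.
Proof.
apply/negP => /det0P [u unz uA].
have hd : (0 < d)%N.
  case: (posnP d) => // d0; exfalso; move/negP: unz; apply.
  by apply/eqP/rowP => i; have := ltn_ord i; rewrite {2}d0.
move/negP: unz; apply; apply/eqP.
apply: (row_free_inj Haff); rewrite mul0mx mul_mx_row.
pose l0 : 'I_d := Ordinal hd.
have eA l : (u *m Ap) 0 l = 0 by rewrite uA mxE.
have E1 : u *m (\matrix_(k < d) row (v k) p) = 0.
  apply/rowP => j; rewrite !mxE.
  case: (ltnP j.+1 d) => hj.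
    transitivity ((u *m Ap) 0 (Ordinal hj)); last exact: eA.
    rewrite mxE; apply: eq_bigr => k _; rewrite !mxE /=.
    by congr (_ * p _ _); apply: val_inj.
  by apply: big1 => k _; rewrite !mxE HX ?mulr0 // -ltnS (leq_trans (ltn_ord k)).
have E2 : u *m (const_mx 1 : 'cV_d) = 0.
  apply/rowP => j; rewrite !mxE.
  transitivity ((u *m Ap) 0 l0); last exact: eA.
  rewrite mxE; apply: eq_bigr => k _.
  by rewrite !mxE.
by rewrite E1 E2 row_mx0.
Qed.

Lemma Hc_aff m (hm : (m.+1 < d)%N) :
  p (v (Ordinal hm)) (Ordinal (ltnW hm)) != 0.
Proof.
apply/negP => /eqP H0; move/negP: Ap_det; apply.
rewrite (det_trig Ap_trig) (bigD1 (Ordinal hm)) //= mxE /=.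
rewrite [ordpred _](_ : _ = Ordinal (ltnW hm)) ?H0 ?mul0r //.
exact: val_inj.
Qed.
End Aff.

Lemma bin2_double d : ('C(d.+1, 2) * 2 = d.+1 * d)%N.
Proof.
elim: d => [|d IH]; first by [].
rewrite binS bin1; lia.
Qed.

Lemma sum_lt_min (m b : nat) : (\sum_(0 <= a < m) (a < b) = minn m b)%N.
Proof.
elim: m => [|m IH]; first by rewrite big_geq // min0n.
rewrite big_nat_recr //= IH; case: (ltnP m b) => h; lia.
Qed.

Lemma card_edges_complete n (e : rel 'I_n) :
  complete_graph e -> #|edges e| = 'C(n, 2).
Proof.
move=> Hc.
transitivity (\sum_(x : 'I_n * 'I_n) ((x.1 < x.2)%N : nat))%N.
  rewrite -sum1_card big_mkcond /=; apply: eq_bigr => x _; rewrite inE Hc.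
  by case: ltnP => h //=; rewrite neq_ltn h.
rewrite -(pair_bigA _ (fun a b : 'I_n => (a < b)%N : nat)) /= exchange_big /=.
transitivity (\sum_(b < n) (b : nat))%N.
  apply: eq_bigr => b _.
  rewrite -(big_mkord xpredT (fun a => (a < b)%N : nat)) sum_lt_min.
  by apply/minn_idPr; exact: ltnW.
by rewrite -(big_mkord xpredT (fun b => b)) bin2_sum.
Qed.

Lemma delta_mul m k (a b : 'I_m) (A : 'M[CC]_(m, k)) :
  delta_mx a b *m A = \matrix_(z, j) ((z == a)%:R * A b j).
Proof.
apply/matrixP => z j; rewrite !mxE (bigD1 b) //= big1 ?addr0.
  by rewrite !mxE eqxx andbT.
by move=> w /negPf hw; rewrite !mxE hw andbF mul0r.
Qed.

Section RF.
Variables (n d : nat) (e : rel 'I_n) (p : 'M[CC]_(n, d)).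

Definition Lx (x : 'I_n * 'I_n) : 'M[CC]_n :=
  delta_mx x.1 x.1 - delta_mx x.1 x.2 + delta_mx x.2 x.2 - delta_mx x.2 x.1.

Lemma Lx_p x : x.1 != x.2 -> Lx x *m p = edge_row p x.
Proof.
move=> ne; rewrite /Lx !(mulmxDl, mulNmx) !delta_mul.
apply/matrixP => z j; rewrite !mxE.
case: (z =P x.1) => [->|h1]; first by rewrite (negPf ne) /=; ring.
by case: (z == x.2); rewrite /= ?mulr1n ?mulr0n; ring.
Qed.

Lemma Lx_1 x : Lx x *m (const_mx 1 : 'cV_n) = 0.
Proof.
rewrite /Lx !(mulmxDl, mulNmx) !delta_mul.
apply/matrixP => z j; rewrite !mxE; ring.
Qed.

Lemma rowfree_R : affinely_independent p -> row_free (rigidity_matrix e p).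
Proof.
move=> Haff; apply: inj_row_free => u uR.
pose xk (k : 'I_#|edges e|) := enum_val k.
have xkE k : xk k \in edges e by exact: enum_valP.
have lt k : ((xk k).1 < (xk k).2)%N by move: (xkE k); rewrite inE => /andP [].
have ne k : (xk k).1 != (xk k).2 by rewrite neq_ltn lt.
pose S := \sum_k u 0 k *: edge_row p (xk k).
have S0 : S = 0.
  have : mxvec S = 0.
    rewrite -uR mulmx_sum_row linear_sum /=; apply: eq_bigr => k _.
    by rewrite linearZ /= rowK.
  by move/(congr1 vec_mx); rewrite mxvecK linear0.
pose L := \sum_k u 0 k *: Lx (xk k).
have L0 : L = 0.
  apply: (row_free_inj Haff); rewrite mul0mx mul_mx_row.
  rewrite !mulmx_suml.
  have -> : \sum_k (u 0 k *: Lx (xk k)) *m p = S.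
    by apply: eq_bigr => k _; rewrite -scalemxAl Lx_p.
  have -> : \sum_k (u 0 k *: Lx (xk k)) *m (const_mx 1 : 'cV_n) = 0.
    by apply: big1 => k _; rewrite -scalemxAl Lx_1 scaler0.
  by rewrite S0 row_mx0.
apply/rowP => k; rewrite mxE.
have := congr1 (fun M : 'M_n => M (xk k).1 (xk k).2) L0.
rewrite /L summxE (bigD1 k) //= big1.
  rewrite !mxE !eqxx eq_sym (negPf (ne k)) /=.
  move=> H; have : - u 0 k = 0 by rewrite -H; ring.
  by move/eqP; rewrite oppr_eq0 => /eqP.
move=> k' nk; rewrite !mxE.
have nx : xk k' != xk k by rewrite (inj_eq enum_val_inj).
set a := (xk k).1; set b := (xk k).2; set y := xk k'.
have nab : a != b by exact: ne.
have b1 : ((a == y.1) && (b == y.1)) = false.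
  by apply/negP => /andP [/eqP h1 /eqP h2]; move/negP: nab; apply; rewrite h1 h2.
have b3 : ((a == y.2) && (b == y.2)) = false.
  by apply/negP => /andP [/eqP h1 /eqP h2]; move/negP: nab; apply; rewrite h1 h2.
have b2 : ((a == y.1) && (b == y.2)) = false.
  apply/negP => /andP [/eqP h1 /eqP h2]; move/negP: nx; apply; apply/eqP.
  by rewrite -/y [y]surjective_pairing -h1 -h2 /a /b -surjective_pairing.
have b4 : ((a == y.2) && (b == y.1)) = false.
  apply/negP => /andP [/eqP h1 /eqP h2].
  have := lt k; rewrite -/a -/b h1 h2 => h; have := lt k'; rewrite -/y.
  by rewrite ltnNge (ltnW h).
by rewrite b1 b2 b3 b4 /= !mulr0n !subr0 addr0 mulr0.
Qed.
End RF.

Theorem lemma2p6 (n d : nat) (e : rel 'I_n) (v : 'I_d -> 'I_n)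
    (p : 'M[CC]_(n, d)) :
  simple_graph e ->
  (d.+1 <= n)%N ->
  injective v ->
  in_X v p ->
  affinely_independent (\matrix_(k < d) row (v k) p) ->
  (restricted_rank (rigidity_matrix e p) (X_mx v) = (n * d - 'C(d.+1, 2))%N
   <-> inf_rigid e p).
Proof.
move=> _ Hn _ HX Haff.
have Hc := Hc_aff HX Haff.
rewrite /restricted_rank rank_eq //.
split; first by move=> H; left.
case=> [H | [Hcomp [Hle Haffp]]]; first exact: H.
have En : n = d.+1 by apply/eqP; rewrite eqn_leq Hle Hn.
have := rowfree_R e Haffp; rewrite /row_free => /eqP ->.
rewrite card_edges_complete //; subst n.
have := bin2_double d; lia.
Qed.
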